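(* In the 1SDI setting where Alice measures $A_0=\sigma_x$, $A_1=\sigma_y$, Bob measures $B_0=(\sigma_x-\sigma_y)/\sqrt2$, $B_1=(\sigma_x+\sigma_y)/\sqrt2$, and Charlie is a black box, the Svetlichny family $P^V_{SvF}$ ($0<V\le1$) demonstrates genuine tripartite steering (i.e. admits no 1SDI steering LHS-LHV model) if and only if $V>\frac1{\sqrt2}$.
   Context: Outcomes and settings: $a,b,c,x,y,z\in\{0,1\}$. For a qubit observable $O$ with eigenvalues $\pm1$, the measurement has projectors $M_0=(\mathbb 1+O)/2$, $M_1=(\mathbb 1-O)/2$; $M^A_{a|x}$, $M^B_{b|y}$ denote the projectors of $A_x$, $B_y$. Svetlichny family: $P^V_{SvF}(abc|xyz)=\frac{2+(-1)^{a\oplus b\oplus c\oplus xy\oplus yz\oplus xz}\sqrt2\,V}{16}$. 1SDI steering LHS-LHV (StLHS) model: $P(abc|xyz)=\sum_\lambda r_\lambda \mathrm{Tr}[(M^A_{a|x}\otimes M^B_{b|y})\rho^\lambda_{AB}]P_\lambda(c|z)+\sum_\lambda p_\lambda \mathrm{Tr}(M^A_{a|x}\rho^\lambda_A)P^Q_\lambda(bc|yz)+\sum_\lambda q_\lambda \mathrm{Tr}(M^B_{b|y}\rho^\lambda_B)P^Q_\lambda(ac|xz)$, with nonnegative weights summing to 1, $\rho^\lambda_{AB}$ two-qubit states, $\rho^\lambda_A,\rho^\lambda_B$ qubit states, $P_\lambda(c|z)$ arbitrary conditional distributions, and $P^Q_\lambda(bc|yz)=\mathrm{Tr}[(M^B_{b|y}\otimes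 N^\lambda_{c|z})\tau^\lambda_{BC}]$, $P^Q_\lambda(ac|xz)=\mathrm{Tr}[(M^A_{a|x}\otimes N^\lambda_{c|z})\tau^\lambda_{AC}]$ for some states $\tau^\lambda$ on $\mathbb C^2\otimes\mathbb C^d$ and POVMs $\{N^\lambda_{c|z}\}_c$ on $\mathbb C^d$. A correlation demonstrates genuine tripartite steering in the 1SDI scenario iff it admits no StLHS model. *)

(* Defs.v *)
(* Complex numbers: an arbitrary numClosedFieldType C
   (e.g. algC). *)
From HB Require Import structures.
From mathcomp Require Import all_boot all_order all_algebra.
Set Implicit Arguments. Unset Strict Implicit. Unset Printing Implicit Defensive.
Import Order.TTheory GRing.Theory Num.Theory.
Local Open Scope ring_scope.

Section QDefs.
Variable C : numClosedFieldType.

Definition adj m n (A : 'M[C]_(m, n)) : 'M[C]_(n, m) := map_mx Num.conj A^T.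

Definition psd n (A : 'M[C]_n) : Prop :=
  adj A = A /\ forall v : 'rV[C]_n, 0 <= (v *m A *m adj v) 0 0.

Definition is_state n (rho : 'M[C]_n) : Prop := psd rho /\ \tr rho = 1.

(* POVM with outcomes c : bool, for each setting z : bool *)
Definition is_povm d (N : bool -> bool -> 'M[C]_d) : Prop :=
  (forall c z, psd (N c z)) /\ (forall z, N false z + N true z = 1%:M).

(* index of C^m (x) C^n, identified with pairs (i, j) *)
Definition pair_idx m n (k : 'I_(m * n)) : 'I_m * 'I_n :=
  enum_val (cast_ord (esym (mxvec_cast m n)) k).

Definition kron m n (A : 'M[C]_m) (B : 'M[C]_n) : 'M[C]_(m * n) :=
  \matrix_(k < m * n, l < m * n) (A (pair_idx k).1 (pair_idx l).1 * B (pair_idx k).2 (pair_idx l).2).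

Definition sx : 'M[C]_2 := \matrix_(i < 2, j < 2) (if i == j then 0 else 1).
Definition sy : 'M[C]_2 :=
  \matrix_(i < 2, j < 2) (if i == j then 0 else if (val i == 0%N) then - 'i else 'i).

Definition proj_of (O : 'M[C]_2) (a : bool) : 'M[C]_2 :=
  2^-1 *: (1%:M + (-1) ^+ a *: O).

Definition Aobs (x : bool) : 'M[C]_2 := if x then sy else sx.
Definition Bobs (y : bool) : 'M[C]_2 :=
  (sqrtC 2)^-1 *: (if y then sx + sy else sx - sy).

Definition MA (a x : bool) : 'M[C]_2 := proj_of (Aobs x) a.
Definition MB (b y : bool) : 'M[C]_2 := proj_of (Bobs y) b.

(* tripartite correlation P(abc|xyz), arguments in order a b c x y z *)
Definition corr3 := bool -> bool -> bool -> bool -> bool -> bool -> C.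

Definition SvF (V : C) : corr3 := fun a b c x y z =>
  (2 + (-1) ^+ (a (+) b (+) c (+) (x && y) (+) (y && z) (+) (x && z))
         * sqrtC 2 * V) / 16.

(* quantum correlation between a qubit party with fixed projective
   measurements M (outcome, setting) and a black-box party C
   (arbitrary finite dimension d, arbitrary state and POVMs):
   Q(s c | t z) = Tr[(M_{s|t} (x) N_{c|z}) tau] *)
Definition qcorr_with (M : bool -> bool -> 'M[C]_2)
    (Q : bool -> bool -> bool -> bool -> C) : Prop :=
  exists d : nat, exists tau : 'M[C]_(2 * d), exists N : bool -> bool -> 'M[C]_d,
    is_state tau /\ is_povm N /\
    forall s c t z, Q s c t z = \tr (kron (M s t) (N c z) *m tau).

(* 1SDI steering LHS-LHV (StLHS) model, with finitely many hidden
   variables lambda in each of the three components. *)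
Definition StLHS (P : corr3) : Prop :=
  exists n : nat,
  exists (r p q : 'I_n -> C),
  exists (rhoAB : 'I_n -> 'M[C]_(2 * 2)) (rhoA rhoB : 'I_n -> 'M[C]_2),
  exists (Pl : 'I_n -> bool -> bool -> C),
  exists (QBC QAC : 'I_n -> bool -> bool -> bool -> bool -> C),
    (forall l, 0 <= r l /\ 0 <= p l /\ 0 <= q l) /\
    \sum_l (r l + p l + q l) = 1 /\
    (forall l, is_state (rhoAB l) /\ is_state (rhoA l) /\ is_state (rhoB l)) /\
    (forall l z, 0 <= Pl l false z /\ 0 <= Pl l true z /\
                 Pl l false z + Pl l true z = 1) /\
    (forall l, qcorr_with MB (QBC l) /\ qcorr_with MA (QAC l)) /\
    forall a b c x y z,
      P a b c x y z =
        \sum_l r l * \tr (kron (MA a x) (MB b y) *m rhoAB l) * Pl l c z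
      + \sum_l p l * \tr (MA a x *m rhoA l) * QBC l b c y z
      + \sum_l q l * \tr (MB b y *m rhoB l) * QAC l a c x z.

End QDefs.

(* Main.v *)
Require Import Defs.
From HB Require Import structures.
From mathcomp Require Import all_boot all_order all_algebra.
From mathcomp Require Import ring lra.
Import Order.TTheory GRing.Theory Num.Theory.
Local Open Scope ring_scope.
Set Implicit Arguments. Unset Strict Implicit. Unset Printing Implicit Defensive.

Section Gen.
Variable C : numClosedFieldType.

Lemma pair_mxvec m n (i : 'I_m) (j : 'I_n) : pair_idx (mxvec_index i j) = (i, j).
Proof. by rewrite /pair_idx /mxvec_index cast_ordK enum_rankK. Qed.

Lemma sum_pair m n (G : 'I_(m * n) -> C) :
  \sum_k G k = \sum_(i < m) \sum_(j < n) G (mxvec_index i j).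
Proof.
rewrite pair_bigA /= (reindex _ (@curry_mxvec_bij m n)) /=.
by apply: eq_bigr => -[i j].
Qed.

Lemma kronE m n (A : 'M[C]_m) (B : 'M[C]_n) i j i' j' :
  kron A B (mxvec_index i j) (mxvec_index i' j') = A i i' * B j j'.
Proof. by rewrite /kron mxE !pair_mxvec. Qed.

Lemma kron_mul m n (A A' : 'M[C]_m) (B B' : 'M[C]_n) :
  kron A B *m kron A' B' = kron (A *m A') (B *m B').
Proof.
apply/matrixP=> k l; case/mxvec_indexP: k => i j; case/mxvec_indexP: l => i' j'.
rewrite [LHS]mxE sum_pair kronE mxE big_distrl /=; apply: eq_bigr => p _.
rewrite mxE big_distrr /=; apply: eq_bigr => q _; rewrite !kronE; ring.
Qed.

Lemma mxvec_index_eq m n (i i' : 'I_m) (j j' : 'I_n) :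
  (mxvec_index i j == mxvec_index i' j') = (i == i') && (j == j').
Proof.
apply/eqP/andP => [e|[/eqP-> /eqP->] //].
by move/(congr1 (@pair_idx m n)): e; rewrite !pair_mxvec => -[-> ->].
Qed.

Lemma kron1 m n : kron (1%:M : 'M[C]_m) (1%:M : 'M[C]_n) = 1%:M.
Proof.
apply/matrixP=> k l; case/mxvec_indexP: k => i j; case/mxvec_indexP: l => i' j'.
rewrite kronE !mxE mxvec_index_eq.
by case: (i == i'); case: (j == j'); rewrite /= ?mulr1 ?mulr0 ?mul0r.
Qed.

Lemma kronDl m n (A A' : 'M[C]_m) (B : 'M[C]_n) : kron (A + A') B = kron A B + kron A' B.
Proof. by apply/matrixP=> k l; rewrite !mxE mulrDl. Qed.
Lemma kronDr m n (A : 'M[C]_m) (B B' : 'M[C]_n) : kron A (B + B') = kron A B + kron A B'.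
Proof. by apply/matrixP=> k l; rewrite !mxE mulrDr. Qed.
Lemma kronZl m n c (A : 'M[C]_m) (B : 'M[C]_n) : kron (c *: A) B = c *: kron A B.
Proof. by apply/matrixP=> k l; rewrite !mxE mulrA. Qed.
Lemma kronZr m n c (A : 'M[C]_m) (B : 'M[C]_n) : kron A (c *: B) = c *: kron A B.
Proof. by apply/matrixP=> k l; rewrite !mxE mulrCA. Qed.
Lemma kronNl m n (A : 'M[C]_m) (B : 'M[C]_n) : kron (- A) B = - kron A B.
Proof. by apply/matrixP=> k l; rewrite !mxE mulNr. Qed.
Lemma kronNr m n (A : 'M[C]_m) (B : 'M[C]_n) : kron A (- B) = - kron A B.
Proof. by apply/matrixP=> k l; rewrite !mxE mulrN. Qed.
Lemma kronBl m n (A A' : 'M[C]_m) (B : 'M[C]_n) : kron (A - A') B = kron A B - kron A' B.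
Proof. by rewrite kronDl kronNl. Qed.
Lemma kronBr m n (A : 'M[C]_m) (B B' : 'M[C]_n) : kron A (B - B') = kron A B - kron A B'.
Proof. by rewrite kronDr kronNr. Qed.

Lemma adj_kron m n (A : 'M[C]_m) (B : 'M[C]_n) : adj (kron A B) = kron (adj A) (adj B).
Proof. by apply/matrixP=> k l; rewrite !mxE rmorphM. Qed.

Lemma tr_kron m n (A : 'M[C]_m) (B : 'M[C]_n) : \tr (kron A B) = \tr A * \tr B.
Proof.
rewrite /mxtrace sum_pair big_distrl /=; apply: eq_bigr => i _.
by rewrite big_distrr /=; apply: eq_bigr => j _; rewrite kronE.
Qed.

End Gen.

Section Psd.
Variable C : numClosedFieldType.

Lemma hadj_mul m n p (A : 'M[C]_(m, n)) (B : 'M[C]_(n, p)) : adj (A *m B) = adj B *m adj A.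
Proof. by rewrite /adj trmx_mul map_mxM. Qed.

Lemma hadjK m n (A : 'M[C]_(m, n)) : adj (adj A) = A.
Proof. exact: trmxCK. Qed.

Lemma hadjD m n (A B : 'M[C]_(m, n)) : adj (A + B) = adj A + adj B.
Proof. by apply/matrixP=> i j; rewrite !mxE rmorphD. Qed.

Lemma hadjZ m n c (A : 'M[C]_(m, n)) : adj (c *: A) = c^* *: adj A.
Proof. by apply/matrixP=> i j; rewrite !mxE rmorphM. Qed.

Lemma hadjN m n (A : 'M[C]_(m, n)) : adj (- A) = - adj A.
Proof. by apply/matrixP=> i j; rewrite !mxE rmorphN. Qed.

Lemma hadj1 n : adj (1%:M : 'M[C]_n) = 1%:M.
Proof. by apply/matrixP=> i j; rewrite !mxE rmorph_nat eq_sym. Qed.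

Lemma hadj0 m n : adj (0 : 'M[C]_(m, n)) = 0.
Proof. by apply/matrixP=> i j; rewrite !mxE rmorph0. Qed.

Lemma form_diag n (w : 'rV[C]_n) (c : 'rV[C]_n) :
  (w *m diag_mx c *m adj w) 0 0 = \sum_k c 0 k * (w 0 k * (w 0 k)^*).
Proof.
rewrite mxE; apply: eq_bigr => k _; rewrite !mxE (bigD1 k) //= big1 ?addr0.
  by rewrite !mxE eqxx mulr1n; ring.
by move=> j /negbTE nj; rewrite !mxE nj mulr0n mulr0.
Qed.

Lemma psd_form n (K : 'M[C]_n) (c : 'rV[C]_n) :
  (forall k, 0 <= c 0 k) -> psd (adj K *m diag_mx c *m K).
Proof.
move=> c0; split.
  rewrite !hadj_mul hadjK mulmxA; congr (_ *m _ *m _).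
  apply/matrixP=> i j; rewrite !mxE; case: eqVneq => [->|ne]; rewrite ?eqxx ?mulr1n.
    by rewrite geC0_conj.
  by rewrite !mulr0n rmorph0.
move=> v; rewrite -!mulmxA mulmxA -[K *m adj v]hadjK hadj_mul hadjK mulmxA form_diag.
by apply: sumr_ge0 => k _; apply: mulr_ge0 => //; apply: mul_conjC_ge0.
Qed.

Lemma psd_spectral n (A : 'M[C]_n) : psd A ->
  exists K : 'M[C]_n, exists c : 'rV[C]_n,
    (forall k, 0 <= c 0 k) /\ A = adj K *m diag_mx c *m K /\ K *m adj K = 1%:M.
Proof.
move=> [hA fA].
have nA : A \is normalmx by apply/normalmxP; change (A *m adj A = adj A *m A); rewrite hA.
have uP := spectral_unitarymx A.
have eA := (orthomx_spectralP nA).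
rewrite invmx_unitary // in eA.
exists (spectralmx A), (spectral_diag A); split; last split => //; last first.
  exact/unitarymxP.
move=> k.
have : spectralmx A *m A *m adj (spectralmx A) = diag_mx (spectral_diag A).
  rewrite {2}eA !mulmxA.
  have uu : spectralmx A *m adj (spectralmx A) = 1%:M by apply/unitarymxP.
  by rewrite uu mul1mx -mulmxA uu mulmx1.
move/matrixP/(_ k k); rewrite [RHS]mxE eqxx mulr1n => <-.
have := fA (row k (spectralmx A)).
rewrite -!row_mul mxE; suff -> : (spectralmx A *m A *m adj (row k (spectralmx A))) k 0 =
  (spectralmx A *m A *m adj (spectralmx A)) k k by [].
by rewrite !mxE; apply: eq_bigr => j _; rewrite !mxE.
Qed.


Lemma conj_entry n (K A : 'M[C]_n) k :
  (K *m A *m adj K) k k = (row k K *m A *m adj (row k K)) 0 0.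
Proof. by rewrite -!row_mul mxE !mxE; apply: eq_bigr => j _; rewrite !mxE. Qed.

Lemma psd_trace n (A B : 'M[C]_n) : psd A -> psd B -> 0 <= \tr (A *m B).
Proof.
move=> pA /psd_spectral [K [c [c0 [-> _]]]].
rewrite mulmxA mxtrace_mulC !mulmxA /mxtrace; apply: sumr_ge0 => k _.
rewrite mxE (bigD1 k) //= big1 ?addr0; last first.
  by move=> j /negbTE nj; rewrite !mxE nj mulr0n mulr0.
rewrite [diag_mx c k k]mxE eqxx mulr1n; apply: mulr_ge0 => //.
by rewrite conj_entry; case: pA => _; apply.
Qed.

Lemma kron_diag m n (a : 'rV[C]_m) (b : 'rV[C]_n) :
  kron (diag_mx a) (diag_mx b) =
  diag_mx (\row_k (a 0 (pair_idx k).1 * b 0 (pair_idx k).2)).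
Proof.
apply/matrixP=> k l; case/mxvec_indexP: k => i j; case/mxvec_indexP: l => i' j'.
rewrite kronE !mxE mxvec_index_eq pair_mxvec /=.
by case: (i == i'); case: (j == j'); rewrite /= ?mulr1n ?mulr0n ?mulr0 ?mul0r.
Qed.

Lemma psd_kron m n (A : 'M[C]_m) (B : 'M[C]_n) : psd A -> psd B -> psd (kron A B).
Proof.
move=> /psd_spectral [P [a [a0 [-> _]]]] /psd_spectral [Q [b [b0 [-> _]]]].
rewrite -!kron_mul -adj_kron kron_diag; apply: psd_form => k.
by rewrite mxE; apply: mulr_ge0.
Qed.

Lemma psdD n (A B : 'M[C]_n) : psd A -> psd B -> psd (A + B).
Proof.
move=> [hA fA] [hB fB]; split; first by rewrite hadjD hA hB.
by move=> v; rewrite mulmxDr mulmxDl mxE; apply: addr_ge0.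
Qed.

Lemma psdZ n (c : C) (A : 'M[C]_n) : 0 <= c -> psd A -> psd (c *: A).
Proof.
move=> c0 [hA fA]; split; first by rewrite hadjZ hA geC0_conj.
by move=> v; rewrite -scalemxAr -scalemxAl mxE; apply: mulr_ge0.
Qed.

Lemma psd0 n : psd (0 : 'M[C]_n).
Proof. by split; [rewrite hadj0|move=> v; rewrite mulmx0 mul0mx mxE]. Qed.

Lemma psd_sum n (I : finType) (F : I -> 'M[C]_n) : (forall i, psd (F i)) -> psd (\sum_i F i).
Proof.
move=> h; apply: (big_ind (fun X => psd X)) => //; [exact: psd0| exact: psdD].
Qed.

Lemma psd_proj n (P : 'M[C]_n) : adj P = P -> P *m P = P -> psd P.
Proof.
move=> hP pP; split => // v.
rewrite -pP -{2}hP !mulmxA -mulmxA -hadj_mul; set w := v *m P.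
by rewrite mxE; apply: sumr_ge0 => k _; rewrite /adj [map_mx _ _ _ _]mxE [_^T _ _]mxE; apply: mul_conjC_ge0.
Qed.

Lemma psd1 n : psd (1%:M : 'M[C]_n).
Proof. by apply: psd_proj; rewrite ?hadj1 ?mulmx1. Qed.

Lemma trD n (A B R : 'M[C]_n) : \tr ((A + B) *m R) = \tr (A *m R) + \tr (B *m R).
Proof. by rewrite mulmxDl mxtraceD. Qed.
Lemma trB n (A B R : 'M[C]_n) : \tr ((A - B) *m R) = \tr (A *m R) - \tr (B *m R).
Proof. by rewrite mulmxBl linearB. Qed.
Lemma trN n (A R : 'M[C]_n) : \tr ((- A) *m R) = - \tr (A *m R).
Proof. by rewrite mulNmx linearN. Qed.
Lemma trZ n c (A R : 'M[C]_n) : \tr ((c *: A) *m R) = c * \tr (A *m R).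
Proof. by rewrite -scalemxAl mxtraceZ. Qed.

Lemma corr_le1 m n (P Q : 'M[C]_m) (P' Q' : 'M[C]_n) (rho : 'M[C]_(m * n)) :
  psd P -> psd Q -> P + Q = 1%:M -> psd P' -> psd Q' -> P' + Q' = 1%:M ->
  is_state rho -> \tr (kron (P - Q) (P' - Q') *m rho) <= 1.
Proof.
move=> pP pQ ePQ pP' pQ' ePQ' [prho trho].
have e1 : \tr (kron (P + Q) (P' + Q') *m rho) = 1 by rewrite ePQ ePQ' kron1 mul1mx.
rewrite -e1 !kronDl !kronNl !kronDr !kronNr !(trD, trN) -subr_ge0.
have h1 := psd_trace (psd_kron pP pQ') prho.
have h2 := psd_trace (psd_kron pQ pP') prho.
set a := \tr (kron P P' *m rho); set b := \tr (kron P Q' *m rho).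
set c := \tr (kron Q P' *m rho); set d := \tr (kron Q Q' *m rho).
have -> : a + b + (c + d) - (a - b - (c - d)) = b *+ 2 + c *+ 2 by ring.
by apply: addr_ge0; apply: mulrn_wge0.
Qed.

End Psd.

Section Pauli.
Variable C : numClosedFieldType.

Lemma ord2 (i : 'I_2) : i = ord0 \/ i = lift ord0 ord0.
Proof. case: i => [[|[|i]]] hi; [left|right|by []]; exact: ord_inj. Qed.

Ltac mx2 := apply/matrixP; move=> [[|[|?]] ?] [[|[|?]] ?] //;
  rewrite !mxE /= ?big_ord_recl ?big_ord0 /= ?mxE /=.

Lemma cI : Num.Num_conj__canonical__GRing_RMorphism C 'i = - 'i.
Proof. exact: conjCi. Qed.

Ltac fin := rewrite ?mulr0 ?mul0r ?add0r ?addr0 ?mulr1 ?mul1r ?mulrN ?mulNr ?opprK -?expr2 ?sqrCi ?opprK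
   ?rmorph0 ?rmorph1 ?rmorphN ?conjCi ?cI ?opprK ?subrr ?addNr //.

Lemma sx2 : sx C *m sx C = 1%:M.
Proof. by mx2; fin. Qed.
Lemma sy2 : sy C *m sy C = 1%:M.
Proof. by mx2; fin. Qed.
Lemma sxy_anti : sx C *m sy C + sy C *m sx C = 0.
Proof. by mx2; fin. Qed.
Lemma adj_sx : adj (sx C) = sx C.
Proof. by mx2; fin. Qed.
Lemma adj_sy : adj (sy C) = sy C.
Proof. by mx2; fin. Qed.
Lemma tr_sx : \tr (sx C) = 0.
Proof. by rewrite /mxtrace !big_ord_recl big_ord0 !mxE /=; fin. Qed.
Lemma tr_sy : \tr (sy C) = 0.
Proof. by rewrite /mxtrace !big_ord_recl big_ord0 !mxE /=; fin. Qed.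



Lemma conj_half : (2^-1 : C)^* = 2^-1.
Proof. by rewrite geC0_conj // invr_ge0 ler0n. Qed.

Lemma proj_adj (O : 'M[C]_2) b : adj O = O -> adj (proj_of O b) = proj_of O b.
Proof.
move=> hO; rewrite /proj_of hadjZ hadjD hadj1 hadjZ hO conj_half.
by case: b; rewrite ?expr0 ?expr1 ?rmorph1 ?rmorphN ?rmorph1.
Qed.

Lemma proj_idem (O : 'M[C]_2) b : O *m O = 1%:M -> proj_of O b *m proj_of O b = proj_of O b.
Proof.
move=> hO; rewrite /proj_of -scalemxAl -scalemxAr scalerA.
rewrite mulmxDl !mulmxDr mul1mx mulmx1 -!scalemxAl -!scalemxAr scalerA hO mul1mx.
apply/matrixP=> i j; rewrite !mxE.
by case: b; rewrite ?expr0 ?expr1; field.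
Qed.

Lemma proj_psd (O : 'M[C]_2) b : adj O = O -> O *m O = 1%:M -> psd (proj_of O b).
Proof. by move=> h1 h2; apply: psd_proj; [apply: proj_adj|apply: proj_idem]. Qed.

Lemma proj_sum (O : 'M[C]_2) : proj_of O false + proj_of O true = 1%:M.
Proof. by apply/matrixP=> i j; rewrite !mxE /= expr0 expr1; field. Qed.

Lemma proj_diff (O : 'M[C]_2) : proj_of O false - proj_of O true = O.
Proof. by apply/matrixP=> i j; rewrite !mxE /= expr0 expr1; field. Qed.


Local Notation s := (sqrtC (2 : C)).

Lemma s2 : s * s = 2.
Proof. by rewrite -expr2 sqrtCK. Qed.
Lemma s_gt0 : 0 < s.
Proof. by rewrite sqrtC_gt0 ltr0n. Qed.
Lemma s_neq0 : s != 0.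
Proof. by rewrite gt_eqF // s_gt0. Qed.
Lemma s_conj : s^* = s.
Proof. by rewrite geC0_conj // ltW // s_gt0. Qed.
Lemma sinv_conj : (s^-1)^* = s^-1.
Proof. by rewrite geC0_conj // invr_ge0 ltW // s_gt0. Qed.

Lemma sinv2 : s^-1 * s^-1 * 2 = 1.
Proof. have := s2; have := s_neq0; set t := sqrtC 2 => nz e; rewrite -e; field; exact: nz. Qed.

Lemma sinv2' : s^-1 * 2 = s.
Proof. have := s2; have := s_neq0; set t := sqrtC 2 => nz e; rewrite -e; field; exact: nz. Qed.

Lemma adjA x : adj (Aobs C x) = Aobs C x.
Proof. by case: x; rewrite /= ?adj_sx ?adj_sy. Qed.
Lemma sqA x : Aobs C x *m Aobs C x = 1%:M.
Proof. by case: x; rewrite /= ?sx2 ?sy2. Qed.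

Lemma adjB y : adj (Bobs C y) = Bobs C y.
Proof.
rewrite /Bobs hadjZ sinv_conj; case: y; rewrite ?hadjD ?hadjN adj_sx adj_sy //.
Qed.

Lemma eq_via (x y a : C) : a = 0 -> x - y = a -> x = y.
Proof. by move=> -> /eqP; rewrite subr_eq0 => /eqP. Qed.

Lemma eq_viaN (x y a : C) : a = 0 -> y - x = a -> x = y.
Proof. by move=> -> /eqP; rewrite subr_eq0 => /eqP. Qed.

Lemma sqY (b : bool) : (sx C + (-1) ^+ b *: sy C) *m (sx C + (-1) ^+ b *: sy C) = 2%:R *: 1%:M.
Proof.
rewrite mulmxDl !mulmxDr -!scalemxAl -!scalemxAr scalerA sx2 sy2.
have e := sxy_anti; apply/matrixP=> i j; move/matrixP/(_ i j): e; rewrite !mxE => e.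
case: b; rewrite ?expr0 ?expr1; [apply: (eq_viaN e)|apply: (eq_via e)]; ring.
Qed.

Lemma BobsE y : Bobs C y = s^-1 *: (sx C + (-1) ^+ (~~ y) *: sy C).
Proof. by rewrite /Bobs; case: y; rewrite /= ?expr0 ?expr1 ?scale1r ?scaleN1r. Qed.

Lemma sqB y : Bobs C y *m Bobs C y = 1%:M.
Proof.
rewrite BobsE -scalemxAl -scalemxAr scalerA sqY scalerA.
apply/matrixP=> i j; rewrite !mxE sinv2; ring.
Qed.

Lemma MA_psd a x : psd (MA C a x).
Proof. exact: proj_psd (adjA x) (sqA x). Qed.
Lemma MB_psd b y : psd (MB C b y).
Proof. exact: proj_psd (adjB y) (sqB y). Qed.
Lemma MA_sum x : MA C false x + MA C true x = 1%:M.
Proof. exact: proj_sum. Qed.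
Lemma MB_sum y : MB C false y + MB C true y = 1%:M.
Proof. exact: proj_sum. Qed.
Lemma MA_diff x : MA C false x - MA C true x = Aobs C x.
Proof. exact: proj_diff. Qed.
Lemma MB_diff y : MB C false y - MB C true y = Bobs C y.
Proof. exact: proj_diff. Qed.


Lemma BsumA : Bobs C false + Bobs C true = s *: Aobs C false.
Proof. by apply/matrixP=> i j; rewrite !mxE /= -[in RHS]sinv2'; ring. Qed.
Lemma BdiffA : Bobs C false - Bobs C true = - (s *: Aobs C true).
Proof. by apply/matrixP=> i j; rewrite !mxE /= -[in RHS]sinv2'; ring. Qed.
Lemma AsumB : Aobs C false + Aobs C true = s *: Bobs C true.
Proof. by apply/matrixP=> i j; rewrite !mxE /=; field; exact: s_neq0. Qed.
Lemma AdiffB : Aobs C false - Aobs C true = s *: Bobs C false.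
Proof. by apply/matrixP=> i j; rewrite !mxE /=; field; exact: s_neq0. Qed.

End Pauli.
Section Scal.
Variable C : numClosedFieldType.
Local Notation s := (sqrtC (2 : C)).

Lemma real_of_bounds (g : C) : -1 <= g -> g \is Num.real.
Proof.
move=> h; have : 0 <= g + 1 by move: h; rewrite -subr_ge0 opprK.
move/ger0_real => r; have -> : g = (g + 1) - 1 by ring.
by apply: rpredB => //; apply: rpred1.
Qed.

Lemma sq_le1 (g : C) : -1 <= g -> g <= 1 -> g ^+ 2 <= 1.
Proof.
move=> h1 h2; rewrite -subr_ge0.
have -> : 1 - g ^+ 2 = (1 - g) * (g - -1) by ring.
by apply: mulr_ge0; rewrite subr_ge0.
Qed.

Lemma bound2 (a0 a1 g0 g1 : C) : a0 \is Num.real -> a1 \is Num.real ->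
  a0 ^+ 2 + a1 ^+ 2 <= 1 -> -1 <= g0 -> g0 <= 1 -> -1 <= g1 -> g1 <= 1 ->
  a0 * (s * g0) + a1 * (s * g1) <= 2.
Proof.
move=> ra0 ra1 ha h01 h02 h11 h12.
have rs : s \is Num.real by apply: sqrtC_real; rewrite ler0n.
have rg0 := real_of_bounds h01; have rg1 := real_of_bounds h11.
have r2 : (2^-1 : C) \is Num.real by apply: ger0_real; rewrite invr_ge0 ler0n.
have rd0 : a0 - s * g0 / 2 \is Num.real by rewrite rpredB ?rpredM.
have rd1 : a1 - s * g1 / 2 \is Num.real by rewrite rpredB ?rpredM.
rewrite -subr_ge0.
have -> : 2 - (a0 * (s * g0) + a1 * (s * g1)) =
   (1 - (a0 ^+ 2 + a1 ^+ 2)) + ((1 - g0 ^+ 2) + (1 - g1 ^+ 2)) / 2 +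
   ((a0 - s * g0 / 2) ^+ 2 + (a1 - s * g1 / 2) ^+ 2) + (2 - s * s) / 4 * (g0 ^+ 2 + g1 ^+ 2).
  by field.
rewrite s2 subrr !mul0r addr0.
apply: addr_ge0; [apply: addr_ge0|].
- by rewrite subr_ge0.
- apply: mulr_ge0; last by rewrite invr_ge0 ler0n.
  by apply: addr_ge0; rewrite subr_ge0 sq_le1.
- by apply: addr_ge0; apply: real_exprn_even_ge0.
Qed.

Lemma bound1 (E00 E01 E10 E11 p0 q0 p1 q1 : C) :
  -1 <= E00 <= 1 -> -1 <= E01 <= 1 -> -1 <= E10 <= 1 -> -1 <= E11 <= 1 ->
  0 <= p0 -> 0 <= q0 -> 0 <= p1 -> 0 <= q1 -> p0 + q0 = 1 -> p1 + q1 = 1 ->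
  (p0 - q0) * (E00 + E01 + E10 - E11) + (p1 - q1) * (E00 - E01 - E10 - E11) <= 4.
Proof.
move=> /andP[a1 a2] /andP[b1 b2] /andP[c1 c2] /andP[d1 d2] hp0 hq0 hp1 hq1 e0 e1.
have -> : (p0 - q0) * (E00 + E01 + E10 - E11) + (p1 - q1) * (E00 - E01 - E10 - E11) =
  p0 * p1 * (2 * (E00 - E11)) + p0 * q1 * (2 * (E01 + E10)) +
  q0 * p1 * (- 2 * (E01 + E10)) + q0 * q1 * (- 2 * (E00 - E11)).
  have -> : q0 = 1 - p0 by rewrite -e0; ring.
  have -> : q1 = 1 - p1 by rewrite -e1; ring.
  ring.
have -> : (4 : C) = p0 * p1 * 4 + p0 * q1 * 4 + q0 * p1 * 4 + q0 * q1 * 4.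
  have -> : q0 = 1 - p0 by rewrite -e0; ring.
  have -> : q1 = 1 - p1 by rewrite -e1; ring.
  ring.
have l1 : 2 * (E00 - E11) <= 4.
  rewrite -subr_ge0; have -> : 4 - 2 * (E00 - E11) = 2 * ((1 - E00) + (E11 - -1)) by ring.
  by apply: mulr_ge0; rewrite ?ler0n // addr_ge0 // subr_ge0.
have l2 : 2 * (E01 + E10) <= 4.
  rewrite -subr_ge0; have -> : 4 - 2 * (E01 + E10) = 2 * ((1 - E01) + (1 - E10)) by ring.
  by apply: mulr_ge0; rewrite ?ler0n // addr_ge0 // subr_ge0.
have l3 : - 2 * (E01 + E10) <= 4.
  rewrite -subr_ge0; have -> : 4 - - 2 * (E01 + E10) = 2 * ((E01 - -1) + (E10 - -1)) by ring.
  by apply: mulr_ge0; rewrite ?ler0n // addr_ge0 // subr_ge0.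
have l4 : - 2 * (E00 - E11) <= 4.
  rewrite -subr_ge0; have -> : 4 - - 2 * (E00 - E11) = 2 * ((E00 - -1) + (1 - E11)) by ring.
  by apply: mulr_ge0; rewrite ?ler0n // addr_ge0 // subr_ge0.
by repeat apply: lerD; apply: ler_wpM2l => //; apply: mulr_ge0.
Qed.


Lemma cc (x : C) : Num.Num_conj__canonical__GRing_RMorphism C x = x^*.
Proof. by []. Qed.

Local Notation i0 := (ord0 : 'I_2).
Local Notation i1 := (lift ord0 ord0 : 'I_2).

Lemma qf2 (v : 'rV[C]_2) (R : 'M[C]_2) : (v *m R *m adj v) 0 0 =
  v 0 i0 * R i0 i0 * (v 0 i0)^* + v 0 i0 * R i0 i1 * (v 0 i1)^* +
  v 0 i1 * R i1 i0 * (v 0 i0)^* + v 0 i1 * R i1 i1 * (v 0 i1)^*.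
Proof. rewrite !mxE !big_ord_recl !big_ord0 !mxE !big_ord_recl !big_ord0 /=. ring. Qed.

Lemma tr_sx_mul (R : 'M[C]_2) : \tr (sx C *m R) = R i1 i0 + R i0 i1.
Proof. by rewrite /mxtrace !big_ord_recl !big_ord0 !mxE !big_ord_recl !big_ord0 !mxE /=; ring. Qed.

Lemma tr_sy_mul (R : 'M[C]_2) : \tr (sy C *m R) = - 'i * R i1 i0 + 'i * R i0 i1.
Proof. by rewrite /mxtrace !big_ord_recl !big_ord0 !mxE !big_ord_recl !big_ord0 !mxE /=; ring. Qed.

Lemma bloch (R : 'M[C]_2) : is_state R ->
  [/\ \tr (sx C *m R) \is Num.real, \tr (sy C *m R) \is Num.real &
      \tr (sx C *m R) ^+ 2 + \tr (sy C *m R) ^+ 2 <= 1].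
Proof.
move=> [[hR fR] trR].
have e10 : R i1 i0 = (R i0 i1)^*.
  by move/matrixP: hR => /(_ i1 i0); rewrite !mxE => <-.
have etr : R i0 i0 + R i1 i1 = 1.
  by move: trR; rewrite /mxtrace !big_ord_recl big_ord0 addr0.
rewrite tr_sx_mul tr_sy_mul e10; set q := R i0 i1.
split.
- by apply/CrealP; rewrite rmorphD !cc conjCK addrC.
- apply/CrealP; rewrite rmorphD !rmorphM !cc conjCK rmorphN !cc conjCi opprK addrC.
  by [].
have f1 := fR (\row_j (if j == i0 then 1 else - 2 * q)).
have f2 := fR (\row_j (if j == i0 then - 2 * q^* else 1)).
rewrite qf2 !mxE /= e10 in f1; rewrite qf2 !mxE /= e10 in f2.
rewrite -/q in f1 f2.
have := addr_ge0 f1 f2.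
rewrite ?rmorph1 ?rmorphM ?rmorphN ?conjCK ?rmorph_nat.
have -> : R i1 i1 = 1 - R i0 i0 by rewrite -etr; ring.
move=> h; rewrite -subr_ge0.
have -> : 1 - ((q^* + q) ^+ 2 + (- 'i * q^* + 'i * q) ^+ 2) =
   1 - (q^* + q) ^+ 2 - 'i ^+ 2 * (q - q^*) ^+ 2 by ring.
rewrite sqrCi; move: h; rewrite !cc conjCK; congr (0 <= _); ring.
Qed.

End Scal.

Section Svet.
Variable C : numClosedFieldType.
Local Notation s := (sqrtC (2 : C)).

Definition sgn (a b c x y z : bool) : C :=
  (-1) ^+ (a (+) b (+) c (+) (x && y) (+) (y && z) (+) (x && z)).

Definition Sv (P : corr3 C) : C :=
  \sum_(a : bool) \sum_(b : bool) \sum_(c : bool) \sum_(x : bool) \sum_(y : bool) \sum_(z : bool)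
    sgn a b c x y z * P a b c x y z.

Lemma Sv_SvF V : Sv (SvF V) = 4 * s * V.
Proof. rewrite /Sv /SvF /sgn !big_bool /= ?expr0 ?expr1. by field. Qed.

Lemma Sv_ext (P Q : corr3 C) : (forall a b c x y z, P a b c x y z = Q a b c x y z) -> Sv P = Sv Q.
Proof.
move=> h; rewrite /Sv; do 6 (apply: eq_bigr => ? _); by rewrite h.
Qed.

Lemma Sv_sum n (F : 'I_n -> corr3 C) :
  Sv (fun a b c x y z => \sum_i F i a b c x y z) = \sum_i Sv (F i).
Proof.
rewrite /Sv; symmetry.
rewrite exchange_big; apply: eq_bigr => a _.
rewrite exchange_big; apply: eq_bigr => b _.
rewrite exchange_big; apply: eq_bigr => c _.
rewrite exchange_big; apply: eq_bigr => x _.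
rewrite exchange_big; apply: eq_bigr => y _.
rewrite exchange_big; apply: eq_bigr => z _.
by rewrite big_distrr.
Qed.

Lemma Sv_lin3 (k1 k2 k3 : C) (f g h : corr3 C) :
  Sv (fun a b c x y z => k1 * f a b c x y z + k2 * g a b c x y z + k3 * h a b c x y z) =
  k1 * Sv f + k2 * Sv g + k3 * Sv h.
Proof. rewrite /Sv !big_bool /=. ring. Qed.


Lemma corr_bnd m n (P Q : 'M[C]_m) (P' Q' : 'M[C]_n) (rho : 'M[C]_(m * n)) :
  psd P -> psd Q -> P + Q = 1%:M -> psd P' -> psd Q' -> P' + Q' = 1%:M ->
  is_state rho -> -1 <= \tr (kron (P - Q) (P' - Q') *m rho) <= 1.
Proof.
move=> pP pQ e pP' pQ' e' hr; rewrite (corr_le1 pP pQ e pP' pQ' e' hr) andbT.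
have eQP : Q + P = 1%:M by rewrite addrC.
have := corr_le1 pQ pP eQP pP' pQ' e' hr.
by rewrite -opprB kronNl trN lerNl.
Qed.

Lemma kron_tr4 m n (P Q : 'M[C]_m) (P' Q' : 'M[C]_n) (rho : 'M[C]_(m * n)) :
  \tr (kron (P - Q) (P' - Q') *m rho) =
  \tr (kron P P' *m rho) - \tr (kron P Q' *m rho) - \tr (kron Q P' *m rho)
  + \tr (kron Q Q' *m rho).
Proof. by rewrite kronBl !kronBr !trB; ring. Qed.

Lemma Sv_T1_eq (t : bool -> bool -> bool -> bool -> C) (Pl : bool -> bool -> C) :
  let E x y := t false x false y - t false x true y - t true x false y + t true x true y in
  Sv (fun a b c x y z => t a x b y * Pl c z) =
  (Pl false false - Pl true false) * (E false false + E false true + E true false - E true true) +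
  (Pl false true - Pl true true) * (E false false - E false true - E true false - E true true).
Proof. by rewrite /Sv /sgn !big_bool /= ?expr0 ?expr1; ring. Qed.

Lemma T1_bound (rho : 'M[C]_(2 * 2)) (Pl : bool -> bool -> C) : is_state rho ->
  (forall z, 0 <= Pl false z /\ 0 <= Pl true z /\ Pl false z + Pl true z = 1) ->
  Sv (fun a b c x y z => \tr (kron (MA C a x) (MB C b y) *m rho) * Pl c z) <= 4.
Proof.
move=> hr hP.
rewrite (Sv_T1_eq (fun a x b y => \tr (kron (MA C a x) (MB C b y) *m rho))) /=.
have hE x y : -1 <= \tr (kron (MA C false x) (MB C false y) *m rho) -
  \tr (kron (MA C false x) (MB C true y) *m rho) - \tr (kron (MA C true x) (MB C false y) *m rho) +
  \tr (kron (MA C true x) (MB C true y) *m rho) <= 1.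
  rewrite -kron_tr4.
  by apply: corr_bnd => //; [exact: MA_psd|exact: MA_psd|exact: MA_sum|exact: MB_psd|exact: MB_psd|exact: MB_sum].
have [a1 [a2 a3]] := hP false; have [b1 [b2 b3]] := hP true.
by apply: bound1.
Qed.


Lemma Sv_T2_eq (u : bool -> bool -> C) (w : bool -> bool -> bool -> bool -> C) :
  let al x := u false x - u true x in
  let F y z := w false false y z - w false true y z - w true false y z + w true true y z in
  Sv (fun a b c x y z => u a x * w b c y z) =
  al false * (F false false + F true false) + al true * (F false false - F true false) +
  al false * (F false true - F true true) - al true * (F false true + F true true).
Proof. by rewrite /Sv /sgn !big_bool /= ?expr0 ?expr1; ring. Qed.

Lemma Sv_T3_eq (u : bool -> bool -> C) (w : bool -> bool -> bool -> bool -> C) :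
  let be y := u false y - u true y in
  let H x z := w false false x z - w false true x z - w true false x z + w true true x z in
  Sv (fun a b c x y z => u b y * w a c x z) =
  be false * (H false false + H true false) + be true * (H false false - H true false) +
  be false * (H false true - H true true) - be true * (H false true + H true true).
Proof. by rewrite /Sv /sgn !big_bool /= ?expr0 ?expr1; ring. Qed.

Lemma neg_bnd (g : C) : -1 <= g <= 1 -> -1 <= - g <= 1.
Proof. by move=> /andP[h1 h2]; rewrite lerNr opprK h2 lerNl h1. Qed.

Lemma T2_bound (rA : 'M[C]_2) (Q : bool -> bool -> bool -> bool -> C) :
  is_state rA -> qcorr_with (MB C) Q ->
  Sv (fun a b c x y z => \tr (MA C a x *m rA) * Q b c y z) <= 4.
Proof.
move=> hA [d [tau [N [ht [[Npsd Nsum] hQ]]]]].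
rewrite (Sv_T2_eq (fun a x => \tr (MA C a x *m rA)) Q) /=.
have eF y z : Q false false y z - Q false true y z - Q true false y z + Q true true y z =
    \tr (kron (Bobs C y) (N false z - N true z) *m tau).
  by rewrite !hQ -MB_diff kron_tr4.
have ea x : \tr (MA C false x *m rA) - \tr (MA C true x *m rA) = \tr (Aobs C x *m rA).
  by rewrite -trB MA_diff.
rewrite !eF !ea.
have e1 z : \tr (kron (Bobs C false) (N false z - N true z) *m tau) +
    \tr (kron (Bobs C true) (N false z - N true z) *m tau) =
    s * \tr (kron (Aobs C false) (N false z - N true z) *m tau).
  by rewrite -trD -kronDl BsumA kronZl trZ.
have e2 z : \tr (kron (Bobs C false) (N false z - N true z) *m tau) -
    \tr (kron (Bobs C true) (N false z - N true z) *m tau) =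
    - (s * \tr (kron (Aobs C true) (N false z - N true z) *m tau)).
  by rewrite -trB -kronBl BdiffA kronNl trN kronZl trZ.
rewrite !e1 !e2.
have hg x z : -1 <= \tr (kron (Aobs C x) (N false z - N true z) *m tau) <= 1.
  rewrite -MA_diff; apply: corr_bnd => //; [exact: MA_psd|exact: MA_psd|exact: MA_sum].
have [r0 r1 hb] := bloch hA.
set a0 := \tr (Aobs C false *m rA); set a1 := \tr (Aobs C true *m rA).
set g := fun x z => \tr (kron (Aobs C x) (N false z - N true z) *m tau).
rewrite -!/(g _ _).
have -> : a0 * (s * g false false) + a1 * - (s * g true false) + a0 * - (s * g true true)
     - a1 * (s * g false true) =
   (a0 * (s * g false false) + a1 * (s * - g true false)) +
   (a0 * (s * - g true true) + a1 * (s * - g false true)) by ring.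
have -> : (4 : C) = 2 + 2 by ring.
have [h1 h2] := (hg false false, hg true false).
have [h3 h4] := (hg true true, hg false true).
move/neg_bnd: h2 => /andP[h2 h2']; move/neg_bnd: h3 => /andP[h3 h3'].
move/neg_bnd: h4 => /andP[h4 h4']; case/andP: h1 => h1 h1'.
by apply: lerD; apply: bound2.
Qed.

Lemma T3_bound (rB : 'M[C]_2) (Q : bool -> bool -> bool -> bool -> C) :
  is_state rB -> qcorr_with (MA C) Q ->
  Sv (fun a b c x y z => \tr (MB C b y *m rB) * Q a c x z) <= 4.
Proof.
move=> hB [d [tau [N [ht [[Npsd Nsum] hQ]]]]].
rewrite (Sv_T3_eq (fun b y => \tr (MB C b y *m rB)) Q) /=.
have eH x z : Q false false x z - Q false true x z - Q true false x z + Q true true x z =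
    \tr (kron (Aobs C x) (N false z - N true z) *m tau).
  by rewrite !hQ -MA_diff kron_tr4.
have eb y : \tr (MB C false y *m rB) - \tr (MB C true y *m rB) = \tr (Bobs C y *m rB).
  by rewrite -trB MB_diff.
rewrite !eH !eb.
have e1 z : \tr (kron (Aobs C false) (N false z - N true z) *m tau) +
    \tr (kron (Aobs C true) (N false z - N true z) *m tau) =
    s * \tr (kron (Bobs C true) (N false z - N true z) *m tau).
  by rewrite -trD -kronDl AsumB kronZl trZ.
have e2 z : \tr (kron (Aobs C false) (N false z - N true z) *m tau) -
    \tr (kron (Aobs C true) (N false z - N true z) *m tau) =
    s * \tr (kron (Bobs C false) (N false z - N true z) *m tau).
  by rewrite -trB -kronBl AdiffB kronZl trZ.
rewrite !e1 !e2.
have hg y z : -1 <= \tr (kron (Bobs C y) (N false z - N true z) *m tau) <= 1.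
  rewrite -MB_diff; apply: corr_bnd => //; [exact: MB_psd|exact: MB_psd|exact: MB_sum].
have [r0 r1 hb] := bloch hB.
set a0 := \tr (sx C *m rB) in r0 hb; set a1 := \tr (sy C *m rB) in r1 hb.
have eb0 : \tr (Bobs C false *m rB) = s^-1 * (a0 - a1).
  by rewrite /Bobs -scalemxAl mxtraceZ mulmxBl linearB.
have eb1 : \tr (Bobs C true *m rB) = s^-1 * (a0 + a1).
  by rewrite /Bobs -scalemxAl mxtraceZ mulmxDl linearD.
rewrite eb0 eb1.
have rsi : s^-1 \is Num.real by rewrite rpredV; apply: sqrtC_real; rewrite ler0n.
have rb0 : s^-1 * (a0 - a1) \is Num.real by rewrite rpredM // rpredB.
have rb1 : s^-1 * (a0 + a1) \is Num.real by rewrite rpredM // rpredD.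
have hbb : (s^-1 * (a0 - a1)) ^+ 2 + (s^-1 * (a0 + a1)) ^+ 2 <= 1.
  have -> : (s^-1 * (a0 - a1)) ^+ 2 + (s^-1 * (a0 + a1)) ^+ 2 =
     (s^-1 * s^-1 * 2) * (a0 ^+ 2 + a1 ^+ 2) by ring.
  by rewrite sinv2 mul1r.
set b0 := s^-1 * (a0 - a1) in rb0 hbb *; set b1 := s^-1 * (a0 + a1) in rb1 hbb *.
set g := fun y z => \tr (kron (Bobs C y) (N false z - N true z) *m tau).
rewrite -!/(g _ _).
have -> : b0 * (s * g true false) + b1 * (s * g false false) + b0 * (s * g false true)
     - b1 * (s * g true true) =
   (b0 * (s * g true false) + b1 * (s * g false false)) +
   (b0 * (s * g false true) + b1 * (s * - g true true)) by ring.
have -> : (4 : C) = 2 + 2 by ring.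
have [h1 h2] := (hg true false, hg false false).
have [h3 h4] := (hg false true, hg true true).
move/neg_bnd: h4 => /andP[h4 h4'].
case/andP: h1 => h1 h1'; case/andP: h2 => h2 h2'; case/andP: h3 => h3 h3'.
by apply: lerD; apply: bound2.
Qed.

End Svet.
Section Model.
Variable C : numClosedFieldType.
Local Notation s := (sqrtC (2 : C)).

Definition cpsi (om : C) (i j : 'I_2) : C :=
  if i == j then (if i == ord0 then 1 else om) else 0.
Definition psi (om : C) : 'rV[C]_(2 * 2) := \row_k cpsi om (pair_idx k).1 (pair_idx k).2.
Definition rho_of (t om : C) : 'M[C]_(2 * 2) :=
  ((1 - t) / 4) *: 1%:M + (t / 2) *: (adj (psi om) *m psi om).

Lemma psd_rank1 n (u : 'rV[C]_n) : psd (adj u *m u).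
Proof.
split; first by rewrite hadj_mul hadjK.
move=> v; rewrite mulmxA -[v *m adj u *m u *m adj v]mulmxA.
rewrite -[u *m adj v]hadjK hadj_mul hadjK.
set w := v *m adj u.
by rewrite mxE big_ord1 /adj [map_mx _ _ _ _]mxE [_^T _ _]mxE; apply: mul_conjC_ge0.
Qed.

Lemma psi_idx om i j : psi om 0 (mxvec_index i j) = cpsi om i j.
Proof. by rewrite /psi mxE pair_mxvec. Qed.

Lemma tr_rank1 om : \tr (adj (psi om) *m psi om) = 1 + om * om^*.
Proof.
rewrite mxtrace_mulC /mxtrace big_ord1 mxE sum_pair !big_ord_recl !big_ord0.
rewrite /adj !mxE !pair_mxvec /cpsi /= ?rmorph0 ?rmorph1 ?conjC0 ?conjC1; ring.
Qed.

Lemma rho_state t om : 0 <= t -> t <= 1 -> om * om^* = 1 -> is_state (rho_of t om).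
Proof.
move=> t0 t1 hom; split.
  apply: psdD; apply: psdZ; rewrite ?psd1 ?psd_rank1 //.
  - by apply: divr_ge0; rewrite ?subr_ge0 ?ler0n.
  - exact: psd1.
  - by apply: divr_ge0; rewrite ?ler0n.
  - exact: psd_rank1.
rewrite /rho_of mxtraceD !mxtraceZ mxtrace1 tr_rank1 hom.
by field.
Qed.


Definition alp (x : bool) : C := if x then - 'i else 1.
Definition alpc (x : bool) : C := if x then 'i else 1.
Definition bet (y : bool) : C := if y then s^-1 * (1 - 'i) else s^-1 * (1 + 'i).

Lemma trAobs x : \tr (Aobs C x) = 0.
Proof. by case: x; rewrite /= ?tr_sx ?tr_sy. Qed.
Lemma trBobs y : \tr (Bobs C y) = 0.
Proof. by rewrite /Bobs mxtraceZ; case: y; rewrite ?linearD ?linearN /= tr_sx tr_sy ?oppr0 addr0 mulr0. Qed.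
Lemma trMA a x : \tr (MA C a x) = 1.
Proof. by rewrite /MA /proj_of mxtraceZ mxtraceD mxtraceZ trAobs mxtrace1 mulr0 addr0 mulVf ?pnatr_eq0. Qed.
Lemma trMB b y : \tr (MB C b y) = 1.
Proof. by rewrite /MB /proj_of mxtraceZ mxtraceD mxtraceZ trBobs mxtrace1 mulr0 addr0 mulVf ?pnatr_eq0. Qed.

Lemma tr_model t om a b x y : om != 0 -> om^* = om^-1 ->
  \tr (kron (MA C a x) (MB C b y) *m rho_of t om) =
  4^-1 + t * ((-1) ^+ a * (-1) ^+ b) * (om^-1 * alp x * bet y + om * alpc x * bet (~~ y)) / 8.
Proof.
move=> om0 omc.
rewrite /rho_of mulmxDr mxtraceD -!scalemxAr !mxtraceZ mulmx1 tr_kron trMA trMB.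
rewrite mulmxA mxtrace_mulC /mxtrace big_ord1 mxE sum_pair.
under eq_bigr => i _ do under eq_bigr => j _ do rewrite [X in _ * X]mxE sum_pair.
rewrite !big_ord_recl !big_ord0 /=.
rewrite !kronE !psi_idx /adj !mxE !pair_mxvec /cpsi /=.
case: x; case: y; rewrite /MA /MB /Bobs /proj_of /alp /alpc /bet /= !mxE /=.
all: rewrite ?omc ?rmorph0 ?rmorph1 ?conjC0 ?conjC1; field; by rewrite om0 s_neq0.
Qed.


Lemma bb01 : bet false * bet true = 1.
Proof.
rewrite /bet; have -> : s^-1 * (1 + 'i) * (s^-1 * (1 - 'i)) =
  s^-1 * s^-1 * 2 - s^-1 * s^-1 * (1 + 'i ^+ 2) by ring.
by rewrite sqrCi sinv2 subrr mulr0 subr0.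
Qed.
Lemma bb10 : bet true * bet false = 1.
Proof. by rewrite mulrC bb01. Qed.
Lemma bb00 : bet false * bet false = 'i.
Proof.
rewrite /bet; have -> : s^-1 * (1 + 'i) * (s^-1 * (1 + 'i)) =
  s^-1 * s^-1 * 2 * 'i + s^-1 * s^-1 * (1 + 'i ^+ 2) by ring.
by rewrite sqrCi sinv2 subrr mulr0 addr0 mul1r.
Qed.
Lemma bb11 : bet true * bet true = - 'i.
Proof.
rewrite /bet; have -> : s^-1 * (1 - 'i) * (s^-1 * (1 - 'i)) =
  - (s^-1 * s^-1 * 2 * 'i) + s^-1 * s^-1 * (1 + 'i ^+ 2) by ring.
by rewrite sqrCi sinv2 subrr mulr0 addr0 mul1r.
Qed.

Definition Tv (d x y : bool) : C :=
  if d then (if x == y then 0 else 1) else (if x == y then (if x then -1 else 1) else 0).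

Lemma reorder (u c v : C) : u * c * v = c * (u * v).
Proof. by ring. Qed.

Lemma core d x y : bet (~~ d) * alp x * bet y + bet d * alpc x * bet (~~ y) = 2 * Tv d x y.
Proof.
rewrite !reorder.
case: d; case: x; case: y; rewrite /alp /alpc /Tv /= ?bb01 ?bb10 ?bb00 ?bb11;
  rewrite ?mulr1 ?mul1r ?mulNr ?mulrN ?opprK -?expr2 ?sqrCi; ring.
Qed.

Definition omg (g d : bool) : C := (-1) ^+ g * bet d.

Lemma omg_h (g d : bool) : (-1) ^+ g * bet (~~ d) * omg g d = 1.
Proof.
rewrite /omg; case: g; case: d; rewrite /= ?expr0 ?expr1 ?mulN1r ?mul1r ?mulNr ?mulrN ?opprK.
- exact: bb01.
- exact: bb10.
- exact: bb01.
- exact: bb10.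
Qed.

Lemma omg_neq0 (g d : bool) : omg g d != 0.
Proof.
by apply/eqP => e; move: (omg_h g d); rewrite e mulr0 => /eqP; rewrite eq_sym oner_eq0.
Qed.

Lemma omg_inv (g d : bool) : (omg g d)^-1 = (-1) ^+ g * bet (~~ d).
Proof. by rewrite -[RHS](mulfK (omg_neq0 g d)) omg_h mul1r. Qed.

Lemma bet_conj y : (bet y)^* = bet (~~ y).
Proof.
by case: y; rewrite /bet /= rmorphM !cc sinv_conj ?rmorphB ?rmorphD ?rmorphN !cc ?rmorph1 ?conjC1 conjCi ?opprK.
Qed.

Lemma omg_conj (g d : bool) : (omg g d)^* = (omg g d)^-1.
Proof.
rewrite omg_inv /omg rmorphM !cc bet_conj; congr (_ * _).
by case: g; rewrite ?expr0 ?expr1 ?rmorph1 ?conjC1 ?rmorphN ?cc ?conjC1 ?rmorph1.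
Qed.

Lemma tr_omg (t : C) (g d a b x y : bool) :
  \tr (kron (MA C a x) (MB C b y) *m rho_of t (omg g d)) =
  4^-1 + t * ((-1) ^+ a * (-1) ^+ b) * ((-1) ^+ g * Tv d x y) / 4.
Proof.
rewrite tr_model ?omg_neq0 ?omg_conj // omg_inv /omg.
have -> : (-1) ^+ g * bet (~~ d) * alp x * bet y + (-1) ^+ g * bet d * alpc x * bet (~~ y)
  = (-1) ^+ g * (bet (~~ d) * alp x * bet y + bet d * alpc x * bet (~~ y)) by ring.
by rewrite core; field.
Qed.

End Model.
Section Final.
Variable C : numClosedFieldType.
Local Notation s := (sqrtC (2 : C)).

Lemma half_state n : is_state ((n.+1%:R)^-1 *: (1%:M : 'M[C]_n.+1)).
Proof.
split; first by apply: psdZ; [rewrite invr_ge0 ler0n | exact: psd1].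
by rewrite mxtraceZ mxtrace1 mulVf // pnatr_eq0.
Qed.

Definition N0 (c z : bool) : 'M[C]_1 := if c then 0 else 1%:M.

Lemma qcorr_triv (M : bool -> bool -> 'M[C]_2) :
  qcorr_with M (fun s' c t z => \tr (kron (M s' t) (N0 c z) *m ((2%:R)^-1 *: (1%:M : 'M[C]_(2 * 1))))).
Proof.
exists 1%N, ((2%:R)^-1 *: 1%:M), N0; split; [|split] => //.
- exact: (half_state 1).
- split; first by move=> [] z; rewrite /N0; [exact: psd0 | exact: psd1].
  by move=> z; rewrite /N0 addr0.
Qed.


Definition gam (l : 'I_4) : bool := (2 <= val l)%N.
Definition del (l : 'I_4) : bool := odd (val l).

Lemma model V : 0 < V -> V <= s^-1 -> StLHS (SvF V).
Proof.
move=> V0 V1.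
have t0 : 0 <= s * V by apply: mulr_ge0; [apply: ltW; exact: s_gt0 | exact: ltW].
have t1 : s * V <= 1.
  apply: le_trans (ler_wpM2l (ltW (@s_gt0 C)) V1) _; by rewrite mulfV // s_neq0.
exists 4%N, (fun _ => 4^-1), (fun _ => 0), (fun _ => 0).
exists (fun l => rho_of (s * V) (omg C (gam l) (del l))).
exists (fun _ => (2%:R)^-1 *: 1%:M), (fun _ => (2%:R)^-1 *: 1%:M).
exists (fun l c z => (c == gam l (+) (del l && z))%:R).
exists (fun _ b c y z => \tr (kron (MB C b y) (N0 c z) *m ((2%:R)^-1 *: (1%:M : 'M[C]_(2 * 1))))).
exists (fun _ a c x z => \tr (kron (MA C a x) (N0 c z) *m ((2%:R)^-1 *: (1%:M : 'M[C]_(2 * 1))))).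
split; [|split; [|split; [|split; [|split]]]].
- by move=> l; rewrite lexx invr_ge0 ler0n.
- by rewrite !big_ord_recl big_ord0 /=; field.
- move=> l; split; last by split; exact: (half_state 1).
  apply: rho_state => //.
  by rewrite omg_conj mulfV // omg_neq0.
- by move=> l z; case: (gam l (+) (del l && z)); rewrite /= ?ler01 ?lexx ?add0r ?addr0.
- by move=> l; split; apply: qcorr_triv.
move=> a b c x y z.
rewrite !big_ord_recl !big_ord0 !mul0r !addr0 /= !tr_omg /gam /del /=.
rewrite /SvF.
case: a; case: b; case: c; case: x; case: y; case: z; rewrite /Tv /= ?expr0 ?expr1; by field.
Qed.

Lemma nogo V : StLHS (SvF V) -> 4 * s * V <= 4.
Proof.
case=> n [r [p [q [rhoAB [rhoA [rhoB [Pl [QBC [QAC [hw [hs [hst [hPl [hQ hP]]]]]]]]]]]]]].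
rewrite -(Sv_SvF V) (Sv_ext hP).
have e a b c x y z :
  \sum_l r l * \tr (kron (MA C a x) (MB C b y) *m rhoAB l) * Pl l c z +
  \sum_l p l * \tr (MA C a x *m rhoA l) * QBC l b c y z +
  \sum_l q l * \tr (MB C b y *m rhoB l) * QAC l a c x z =
  \sum_l (r l * (\tr (kron (MA C a x) (MB C b y) *m rhoAB l) * Pl l c z) +
          p l * (\tr (MA C a x *m rhoA l) * QBC l b c y z) +
          q l * (\tr (MB C b y *m rhoB l) * QAC l a c x z)).
  by rewrite -!big_split; apply: eq_bigr => l _; rewrite !mulrA.
rewrite (Sv_ext e) Sv_sum.
have hb l : Sv (fun a b c x y z =>
    r l * (\tr (kron (MA C a x) (MB C b y) *m rhoAB l) * Pl l c z) +
    p l * (\tr (MA C a x *m rhoA l) * QBC l b c y z) +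
    q l * (\tr (MB C b y *m rhoB l) * QAC l a c x z)) <= 4 * (r l + p l + q l).
  rewrite (Sv_lin3 (r l) (p l) (q l)
    (fun a b c x y z => \tr (kron (MA C a x) (MB C b y) *m rhoAB l) * Pl l c z)
    (fun a b c x y z => \tr (MA C a x *m rhoA l) * QBC l b c y z)
    (fun a b c x y z => \tr (MB C b y *m rhoB l) * QAC l a c x z)).
  have [h1 [h2 h3]] := hw l; have [s1 [s2 s3]] := hst l; have [q1 q2] := hQ l.
  have b1 := T1_bound s1 (hPl l); have b2 := T2_bound s2 q1; have b3 := T3_bound s3 q2.
  have -> : 4 * (r l + p l + q l) = r l * 4 + p l * 4 + q l * 4 by ring.
  by rewrite !lerD // ler_wpM2l.
apply: le_trans (ler_sum _ (fun l _ => hb l)) _.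
by rewrite -mulr_sumr hs mulr1.
Qed.

End Final.

Theorem proposition1 (C : numClosedFieldType) (V : C) :
  0 < V -> V <= 1 ->
  (~ StLHS (SvF V) <-> (sqrtC 2)^-1 < V).
Proof.
move=> V0 V1; split.
- move=> nS.
  have rV : V \is Num.real by apply: gtr0_real.
  have rs : (sqrtC (2 : C))^-1 \is Num.real.
    by rewrite rpredV; apply: sqrtC_real; rewrite ler0n.
  rewrite real_ltNge //; apply/negP => h; apply: nS; exact: model.
- move=> hV hS; have := nogo hS.
  have h1 : sqrtC 2 * (sqrtC 2)^-1 < sqrtC 2 * V by rewrite ltr_pM2l // s_gt0.
  rewrite mulfV ?s_neq0 // in h1.
  have h4 : 4 * 1 < 4 * (sqrtC 2 * V) by rewrite ltr_pM2l // ltr0n.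
  rewrite mulr1 mulrA in h4.
  by move=> h; have := lt_le_trans h4 h; rewrite ltxx.
Qed.
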